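(* Let $\mathcal C$ be a Clifford circuit on $n$ qubits with $m$ Pauli measurements. The set $\mathcal O(\mathcal C)\subseteq\mathbb Z_2^m$ of all outcome bit-strings that occur with nonzero probability for some input state of the circuit is an affine subspace of $\mathbb Z_2^m$. Moreover, $\mathcal O(\mathcal C)$ is exactly the set of $o\in\mathbb Z_2^m$ satisfying all the affine equations in the list $R$ returned by the Outcome-Code Algorithm described in the context.
   Context: A Clifford circuit $\mathcal C$ on $n$ qubits is a finite sequence $(C_1,\dots,C_s)$ of operations, each either a unitary Clifford gate or the measurement of a Hermitian $n$-qubit Pauli operator. Each $C_i$ has a level $\mathrm{level}(C_i)\in\{1,2,\dots\}$; operations of equal level have disjoint supports and $i\le j$ implies $\mathrm{level}(C_i)\le\mathrm{level}(C_j)$. No constraint is placed on the input state. The circuit has $m$ measurements; listed in circuit order, the $j$-th one measures the operator $S_j$. An execution produces an outcome bit-string $o\in\mathbb Z_2^m$, with $o_j=0$ if the measurement of $S_j$ yields eigenvalue $+1$ and $o_j=1$ if it yields $-1$. Outcome-Code Algorithm. Maintain a list $\mathcal S$ of pairs $(T,K_T)$ where $T$ is a Hermitian $n$-qubit Pauli operator with sign $\pm1$ and $K_T\subseteq\{1,\dots,m\}$, initially empty, and a list $R$ of affine equations in $o_1,\dots,o_m$, initially empty. Process $C_1,\dots,C_s$ in order. If $C_i$ is a unitary $U$, replace each $T$ by $UTU^{-1}$ (keeping $K_T$). If $C_i$ is the measurement of $S_j$: (a) if $S_j$ or $-S_j$ lies in the group $\langle\mathcal S\rangle$ generated by the operators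 $T$ in $\mathcal S$, write $\epsilon S_j=\prod_{T\in\mathcal T}T$ with $\mathcal T\subseteq\mathcal S$ and $\epsilon\in\{\pm1\}$, let $K_j$ be the symmetric difference of the sets $K_T$, $T\in\mathcal T$, and add to $R$ the equation $o_j+\sum_{k\in K_j}o_k=0$ if $\epsilon=+1$, respectively $o_j+\sum_{k\in K_j}o_k=1$ if $\epsilon=-1$; (b) otherwise, if some $T\in\mathcal S$ anticommutes with $S_j$, replace every other $T'\in\mathcal S$ that anticommutes with $S_j$ by $(TT',K_T\triangle K_{T'})$ and then remove $(T,K_T)$ from $\mathcal S$; finally (in case (b)) add $(S_j,\{j\})$ to $\mathcal S$. Return $R$. *)

(* Defs.v *)
From HB Require Import structures.
From mathcomp Require Import all_boot all_order all_algebra.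
From Stdlib Require Lists.List.
Set Implicit Arguments. Unset Strict Implicit. Unset Printing Implicit Defensive.
Import Order.TTheory GRing.Theory Num.Theory.
Local Open Scope ring_scope.

(* Hermitian n-qubit Pauli operators with sign +-1.                    *)
(* A single-qubit letter is encoded by (x,z) : bool * bool:            *)
(*   (false,false) = I, (true,false) = X, (true,true) = Y,             *)
(*   (false,true) = Z.                                                 *)
(* A signed Pauli is (s, w): s = true means the sign -1.               *)
Definition letter := (bool * bool)%type.
Definition pauli (n : nat) := (bool * {ffun 'I_n -> letter})%type.

Section Matrices.
Variable C : numClosedFieldType.
Variable n : nat.

(* bit j of the computational basis index r (qubit j). *)
Definition bit (j : nat) (r : nat) : bool := odd (r %/ 2 ^ j).

Definition letter_entry (l : letter) (a b : bool) : C :=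
  match l with
  | (false, false) => if a == b then 1 else 0
  | (true, false)  => if a != b then 1 else 0
  | (true, true)   => if a != b then (if a then 'i else - 'i) else 0
  | (false, true)  => if a == b then (if a then -1 else 1) else 0
  end.

Definition pmx (p : pauli n) : 'M[C]_(2 ^ n) :=
  \matrix_(r, c) ((if p.1 then -1 else 1) *
                  \prod_(j < n) letter_entry (p.2 j) (bit j r) (bit j c)).

Definition adjoint (U : 'M[C]_(2 ^ n)) : 'M[C]_(2 ^ n) :=
  (map_mx Num.conj U)^T.

Definition unitary (U : 'M[C]_(2 ^ n)) : Prop := U *m adjoint U = 1%:M.

Definition clifford (U : 'M[C]_(2 ^ n)) : Prop :=
  unitary U /\ forall P : pauli n, exists Q : pauli n,
      U *m pmx P *m adjoint U = pmx Q.

Inductive op := Gate of 'M[C]_(2 ^ n) | Meas of pauli n.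

Definition circuit := seq op.

Definition valid_circuit (c : circuit) : Prop :=
  forall U, Stdlib.Lists.List.In (Gate U) c -> clifford U.

Definition is_meas (x : op) : bool := if x is Meas _ then true else false.

Definition nmeas (c : circuit) : nat := count is_meas c.

(* outcome bit j (0-based, in circuit order) of o *)
Definition ob (m : nat) (o : 'rV['F_2]_m) (j : nat) : 'F_2 :=
  if (insub j : option 'I_m) is Some k then o 0 k else 0.

Definition sgnF (b : 'F_2) : C := if b == 0 then 1 else -1.

Definition proj (b : 'F_2) (P : pauli n) : 'M[C]_(2 ^ n) :=
  2%:R^-1 *: (1%:M + sgnF b *: pmx P).

(* unnormalized post-measurement state after running the circuit,
   conditioned on the outcome string o; j counts measurements seen *)
Fixpoint run_aux (m : nat) (o : 'rV['F_2]_m) (j : nat) (c : circuit)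
    (psi : 'cV[C]_(2 ^ n)) : 'cV[C]_(2 ^ n) :=
  match c with
  | [::] => psi
  | Gate U :: c' => run_aux o j c' (U *m psi)
  | Meas P :: c' => run_aux o j.+1 c' (proj (ob o j) P *m psi)
  end.

Definition sqnorm (v : 'cV[C]_(2 ^ n)) : C := \sum_i `|v i 0| ^+ 2.

Definition prob (c : circuit) (o : 'rV['F_2]_(nmeas c)) (psi : 'cV[C]_(2 ^ n)) : C :=
  sqnorm (run_aux o 0 c psi).

Definition possible (c : circuit) (o : 'rV['F_2]_(nmeas c)) : Prop :=
  exists psi : 'cV[C]_(2 ^ n), sqnorm psi = 1 /\ prob (c:=c) o psi != 0.

(* The Outcome-Code Algorithm (as a relation, covering the choices     *)
(* of T and of the subset in the algorithm)                            *)
Section Algo.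
Variable m : nat.

Definition entry := ('M[C]_(2 ^ n) * {set 'I_m})%type.
(* equation (j, K, c) : o_j + sum_{k in K} o_k = c *)
Definition equation := (nat * {set 'I_m} * 'F_2)%type.

Inductive in_gen (L : seq 'M[C]_(2 ^ n)) : 'M[C]_(2 ^ n) -> Prop :=
| gen_one : in_gen L 1%:M
| gen_elt T : T \in L -> in_gen L T
| gen_mul A B : in_gen L A -> in_gen L B -> in_gen L (A *m B)
| gen_inv A : in_gen L A -> in_gen L (invmx A).

Definition anticomm (A B : 'M[C]_(2 ^ n)) : Prop := A *m B = - (B *m A).

Definition symdiff (A B : {set 'I_m}) : {set 'I_m} := (A :\: B) :|: (B :\: A).

Definition mprod (s : seq entry) : 'M[C]_(2 ^ n) :=
  foldr (fun e acc => e.1 *m acc) 1%:M s.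

Definition ksum (s : seq entry) : {set 'I_m} :=
  foldr (fun e acc => symdiff e.2 acc) set0 s.

Definition rem_at (i : nat) (s : seq entry) : seq entry :=
  take i s ++ drop i.+1 s.

Definition singl (j : nat) : {set 'I_m} := [set k : 'I_m | val k == j].

Definition state := (seq entry * seq equation * nat)%type.

Inductive step : op -> state -> state -> Prop :=
| step_gate U (S : seq entry) (R : seq equation) (j : nat) :
    step (Gate U) (S, R, j)
         ([seq (U *m e.1 *m invmx U, e.2) | e <- S], R, j)
| step_dep P (S : seq entry) (R : seq equation) (j : nat) (b : bitseq) (eps : 'F_2) :
    (in_gen (map fst S) (pmx P) \/ in_gen (map fst S) (- pmx P)) ->
    size b = size S ->
    (if eps == 1 then - pmx P else pmx P) = mprod (mask b S) ->
    step (Meas P) (S, R, j) (S, rcons R (j, ksum (mask b S), eps), j.+1)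
| step_anti P (S : seq entry) (R : seq equation) (j : nat) (i : nat) :
    ~ (in_gen (map fst S) (pmx P) \/ in_gen (map fst S) (- pmx P)) ->
    (i < size S)%N ->
    anticomm (nth (1%:M, set0) S i).1 (pmx P) ->
    step (Meas P) (S, R, j)
      (rcons [seq (if e.1 *m pmx P == - (pmx P *m e.1)
                   then ((nth (1%:M, set0) S i).1 *m e.1,
                         symdiff (nth (1%:M, set0) S i).2 e.2)
                   else e) | e <- rem_at i S]
             (pmx P, singl j), R, j.+1)
| step_free P (S : seq entry) (R : seq equation) (j : nat) :
    ~ (in_gen (map fst S) (pmx P) \/ in_gen (map fst S) (- pmx P)) ->
    (forall e, Stdlib.Lists.List.In e S -> ~ anticomm e.1 (pmx P)) ->
    step (Meas P) (S, R, j) (rcons S (pmx P, singl j), R, j.+1).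

Inductive run_alg : circuit -> state -> state -> Prop :=
| run_nil s : run_alg [::] s s
| run_cons x c s1 s2 s3 : step x s1 s2 -> run_alg c s2 s3 -> run_alg (x :: c) s1 s3.

Definition OCA (c : circuit) (R : seq equation) : Prop :=
  exists S j, run_alg c ([::], [::], 0%N) (S, R, j).

Definition satisfies (R : seq equation) (o : 'rV['F_2]_m) : Prop :=
  forall e, e \in R -> ob o e.1.1 + \sum_(k in e.1.2) o 0 k = e.2.

End Algo.
End Matrices.

(* Main.v *)
Require Import Defs.
From HB Require Import structures.
From mathcomp Require Import all_boot all_order all_algebra.
From mathcomp Require Import ring.
From Stdlib Require Import Classical.
Set Implicit Arguments. Unset Strict Implicit. Unset Printing Implicit Defensive.
Import GRing.Theory Num.Theory.
Local Open Scope ring_scope.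

Section Bits.
Variable C : numClosedFieldType.

Lemma sum_pairs (N : nat) (F : nat -> C) :
  \sum_(0 <= k < N.*2) F k = \sum_(0 <= k < N) (F k.*2 + F k.*2.+1).
Proof.
elim: N => [|N IH]; first by rewrite !big_geq.
by rewrite doubleS !big_nat_recr //= IH addrA.
Qed.

Lemma bitS j k : bit j.+1 k = bit j k./2.
Proof. by rewrite /bit expnS divnMA divn2. Qed.

Lemma bit0 k : bit 0 k = odd k.
Proof. by rewrite /bit expn0 divn1. Qed.

Lemma sum_bits (n : nat) (f : nat -> bool -> C) :
  \sum_(k < 2 ^ n) \prod_(j < n) f j (bit j k) =
  \prod_(j < n) (f j false + f j true).
Proof.
elim: n f => [|n IH] f.
  by rewrite expn0 big_ord1 !big_ord0.
rewrite big_ord_recl.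
have -> : \prod_(i < n) (f (bump 0 i) false + f (bump 0 i) true) =
   \sum_(k < 2 ^ n) \prod_(j < n) f j.+1 (bit j k).
  by rewrite (IH (fun j => f j.+1)); apply: eq_bigr => j _; rewrite /bump add1n.
rewrite -(big_mkord xpredT (fun k => \prod_(j < n.+1) f j (bit j k))) expnS mul2n sum_pairs big_mkord mulr_sumr.
apply: eq_bigr => i _.
rewrite !big_ord_recl !bit0 odd_double /= odd_double /=.
have h1 : (i : nat).*2./2 = i by rewrite doubleK.
have h2 : (i : nat).*2.+1./2 = i by rewrite -[(i : nat).*2.+1]/(true + (i : nat).*2)%N half_bit_double.
rewrite mulrDl; congr (_ + _); congr (_ * _); apply: eq_bigr => j _;
by rewrite /bump /= add1n bitS ?h1 ?h2.
Qed.

End Bits.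

Section Letters.
Variable C : numClosedFieldType.

Definition M2 (a b : letter) (x y : bool) : C :=
  letter_entry C a x false * letter_entry C b false y +
  letter_entry C a x true * letter_entry C b true y.

Definition lmul (a b : letter) : letter := (a.1 (+) b.1, a.2 (+) b.2).

Definition lphase (a b : letter) : C :=
  match a, b with
  | (true,false), (true,true) => 'i
  | (true,true), (false,true) => 'i
  | (false,true), (true,false) => 'i
  | (true,true), (true,false) => - 'i
  | (false,true), (true,true) => - 'i
  | (true,false), (false,true) => - 'i
  | _, _ => 1
  end.

Definition leps (a b : letter) : C :=
  if (a == (false,false)) || (b == (false,false)) || (a == b) then 1 else -1.

Lemma ii : ('i : C) * 'i = -1.
Proof. by rewrite -expr2 sqrCi. Qed.

Lemma M2E a b x y : M2 a b x y = lphase a b * letter_entry C (lmul a b) x y.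
Proof.
case: a => [[] []]; case: b => [[] []]; case: x; case: y;
rewrite /M2 /lphase /lmul /letter_entry /=;
rewrite ?mulr0 ?mul0r ?mulr1 ?mul1r ?addr0 ?add0r ?mulrN ?mulNr ?opprK ?ii ?opprK //.
all: by rewrite ?mulr1 ?mul1r ?mulrN ?mulNr ?opprK ?mulr1 ?mul1r.
Qed.

Lemma M2C a b x y : M2 a b x y = leps a b * M2 b a x y.
Proof.
case: a => [[] []]; case: b => [[] []]; case: x; case: y;
rewrite /M2 /leps /letter_entry /=;
rewrite ?mulr0 ?mul0r ?mulr1 ?mul1r ?addr0 ?add0r ?mulrN ?mulNr ?opprK ?ii ?opprK //.
all: by rewrite ?mulr1 ?mul1r ?mulr0 ?mul0r ?oppr0 ?mulrN ?mulNr ?opprK ?mulr1 ?mul1r.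
Qed.

Lemma M2sq a x y : M2 a a x y = (x == y)%:R.
Proof.
case: a => [[] []]; case: x; case: y;
rewrite /M2 /letter_entry /=;
rewrite ?mulr0 ?mul0r ?mulr1 ?mul1r ?addr0 ?add0r ?mulrN ?mulNr ?opprK ?ii ?opprK //.
all: by rewrite ?mulr1 ?mul1r ?mulrN ?mulNr ?opprK ?mulr1 ?mul1r.
Qed.

End Letters.

Lemma bits_inj n r c : (r < 2 ^ n)%N -> (c < 2 ^ n)%N ->
  (forall j, (j < n)%N -> bit j r = bit j c) -> r = c.
Proof.
elim: n r c => [|n IH] r c.
  by rewrite expn0 !ltnS !leqn0 => /eqP -> /eqP ->.
move=> hr hc hb.
have h0 := hb 0%N isT; rewrite !bit0 in h0.
have h : r./2 = c./2.
  apply: IH.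
  - by rewrite -divn2 ltn_divLR // muln2 -mul2n -expnS.
  - by rewrite -divn2 ltn_divLR // muln2 -mul2n -expnS.
  by move=> j hj; rewrite -!bitS; apply: hb.
by rewrite -(odd_double_half r) -(odd_double_half c) h0 h.
Qed.

Section PauliMx.
Variable C : numClosedFieldType.
Variable n : nat.

Definition sgs (s : bool) : C := if s then -1 else 1.

Definition fo (g : 'I_n -> bool -> C) (j : nat) (b : bool) : C :=
  if insub j is Some j' then g j' b else 1.

Lemma sum_bits_ord (g : 'I_n -> bool -> C) :
  \sum_(k < 2 ^ n) \prod_(j < n) g j (bit j k) =
  \prod_(j < n) (g j false + g j true).
Proof.
have e1 k : \prod_(j < n) g j (bit j k) = \prod_(j < n) fo g j (bit j k).
  by apply: eq_bigr => j _; rewrite /fo valK.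
under eq_bigr do rewrite e1.
rewrite sum_bits; apply: eq_bigr => j _; by rewrite /fo valK.
Qed.

Lemma prod_nat (P : 'I_n -> bool) :
  \prod_(j < n) ((P j)%:R : C) = ([forall j, P j])%:R.
Proof.
case: (boolP [forall j, P j]) => H.
  by apply: big1 => j _; rewrite (forallP H).
move: H; rewrite negb_forall => /existsP [j Hj].
by rewrite (bigD1 j) //= (negbTE Hj) mul0r.
Qed.

Lemma prod_bits_eq (r c : 'I_(2 ^ n)) :
  \prod_(j < n) ((bit j r == bit j c)%:R : C) = (r == c)%:R.
Proof.
rewrite prod_nat.
suff -> : [forall j : 'I_n, bit j r == bit j c] = (r == c) by [].
apply/forallP/eqP => [H|->] //.
apply: val_inj; apply: (@bits_inj n); [exact: ltn_ord|exact: ltn_ord|move=> j hj].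
exact: (eqP (H (Ordinal hj))).
Qed.

Lemma pmx_mulE (p q : pauli n) r c :
  (pmx C p *m pmx C q) r c = sgs p.1 * sgs q.1 *
    \prod_(j < n) M2 C (p.2 j) (q.2 j) (bit j r) (bit j c).
Proof.
rewrite !mxE.
under eq_bigr do rewrite !mxE.
have -> : \sum_(k < 2 ^ n) ((if p.1 then -1 else 1) *
      \prod_(j < n) letter_entry C (p.2 j) (bit j r) (bit j k) *
     ((if q.1 then -1 else 1) *
      \prod_(j < n) letter_entry C (q.2 j) (bit j k) (bit j c))) =
   sgs p.1 * sgs q.1 * \sum_(k < 2 ^ n) \prod_(j < n)
     (letter_entry C (p.2 j) (bit j r) (bit j k) *
      letter_entry C (q.2 j) (bit j k) (bit j c)).
  rewrite mulr_sumr; apply: eq_bigr => k _; rewrite big_split /= /sgs.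
  by rewrite -!mulrA; congr (_ * _); rewrite mulrCA.
rewrite (sum_bits_ord (fun j b => letter_entry C (p.2 j) (bit j r) b *
      letter_entry C (q.2 j) b (bit j c))).
by [].
Qed.

Definition pmul (p q : pauli n) : pauli n :=
  (false, [ffun j => lmul (p.2 j) (q.2 j)]).

Lemma pmx_mul (p q : pauli n) :
  pmx C p *m pmx C q = (sgs p.1 * sgs q.1 * \prod_(j < n) lphase C (p.2 j) (q.2 j))
     *: pmx C (pmul p q).
Proof.
apply/matrixP => r c; rewrite pmx_mulE !mxE /= mul1r.
under eq_bigr do rewrite M2E.
by rewrite big_split /= mulrA; congr (_ * _); apply: eq_bigr => j _; rewrite ffunE.
Qed.

Lemma prod_pm1 (I : finType) (F : I -> C) :
  (forall i, F i = 1 \/ F i = -1) ->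
  \prod_i F i = 1 \/ \prod_i F i = -1.
Proof.
move=> H; apply: (big_ind (fun x => x = 1 \/ x = -1)); first by left.
  by move=> x y [->|->] [->|->]; rewrite ?mulr1 ?mulrN1 ?opprK; auto.
by move=> i _; apply: H.
Qed.

Lemma pmx_comm (p q : pauli n) :
  pmx C p *m pmx C q = pmx C q *m pmx C p \/ pmx C p *m pmx C q = - (pmx C q *m pmx C p).
Proof.
have H : (pmx C p *m pmx C q) = (\prod_(j < n) leps C (p.2 j) (q.2 j)) *: (pmx C q *m pmx C p).
  apply/matrixP => r c; rewrite [RHS]mxE !pmx_mulE.
  under eq_bigr do rewrite M2C.
  rewrite big_split /= [sgs q.1 * _]mulrC; rewrite !mulrA; congr (_ * _).
  by rewrite mulrC mulrA.
case: (@prod_pm1 _ (fun j => leps C (p.2 j) (q.2 j))) => [j|E|E].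
- by rewrite /leps; case: ifP; auto.
- by left; rewrite H E scale1r.
- by right; rewrite H E scaleN1r.
Qed.

Lemma pmx_sq (p : pauli n) : pmx C p *m pmx C p = 1%:M.
Proof.
apply/matrixP => r c; rewrite pmx_mulE.
under eq_bigr do rewrite M2sq.
rewrite prod_bits_eq mxE.
by rewrite /sgs; case: ifP => _; rewrite ?mulrNN !mul1r.
Qed.

Definition all_id (p : pauli n) := [forall j, p.2 j == (false, false)].

Lemma pmx_id (p : pauli n) : all_id p -> pmx C p = (sgs p.1)%:M.
Proof.
move=> /forallP H; apply/matrixP => r c; rewrite !mxE.
have -> : \prod_(j < n) letter_entry C (p.2 j) (bit j r) (bit j c) =
    \prod_(j < n) ((bit j r == bit j c)%:R : C).
  by apply: eq_bigr => j _; rewrite (eqP (H j)) /=; case: eqP.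
by rewrite prod_bits_eq /sgs mulr_natr.
Qed.

Lemma pmx_tr (p : pauli n) : ~~ all_id p -> \tr (pmx C p) = 0.
Proof.
rewrite /all_id negb_forall => /existsP [j Hj].
rewrite /mxtrace.
under eq_bigr do rewrite mxE.
rewrite -mulr_sumr (sum_bits_ord (fun j b => letter_entry C (p.2 j) b b)) (bigD1 j) //=.
move: Hj; case: (p.2 j) => [[] []] //= _; by rewrite ?mulr0 ?mul0r ?addr0 ?add0r ?addrN ?subrr ?mul0r ?mulr0.
Qed.

Definition isP (M : 'M[C]_(2 ^ n)) := exists (l : C) (p : pauli n), M = l *: pmx C p.

Lemma isP_pmx p : isP (pmx C p).
Proof. by exists 1, p; rewrite scale1r. Qed.

Lemma isP_mul A B : isP A -> isP B -> isP (A *m B).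
Proof.
move=> [l [p ->]] [l' [q ->]].
rewrite -scalemxAl -scalemxAr pmx_mul !scalerA.
by eexists; exists (pmul p q).
Qed.

Lemma isP_scale a A : isP A -> isP (a *: A).
Proof. by move=> [l [p ->]]; rewrite scalerA; exists (a * l), p. Qed.

Lemma isP_tr A : isP A -> (forall mu, A != mu%:M) -> \tr A = 0.
Proof.
move=> [l [p ->]] H.
case: (boolP (all_id p)) => Hp.
  by move: (H (l * sgs p.1)); rewrite pmx_id // scale_scalar_mx eqxx.
by rewrite mxtraceZ pmx_tr // mulr0.
Qed.

Lemma isP_comm A B : isP A -> isP B -> A *m B = B *m A \/ A *m B = - (B *m A).
Proof.
move=> [l [p ->]] [l' [q ->]].
rewrite -!scalemxAl -!scalemxAr !scalerA [l' * l]mulrC.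
case: (pmx_comm p q) => ->; auto.
by right; rewrite scalerN.
Qed.

End PauliMx.

Lemma F2_cases (a : 'F_2) : a = 0 \/ a = 1.
Proof. case: a => [[|[|k]] Hk]; [left|right|by []]; exact: val_inj. Qed.

Lemma F2_dbl (a : 'F_2) : a + a = 0.
Proof. by case: (F2_cases a) => ->; [rewrite addr0 | exact: val_inj]. Qed.

Section Lists.
Variable C : numClosedFieldType.
Variable n : nat.
Notation MX := 'M[C]_(2 ^ n).

Definition mp (L : seq MX) : MX := foldr mulmx 1%:M L.

Definition CI (L : seq MX) :=
  (forall x y, x \in L -> y \in L -> x *m y = y *m x) /\
  (forall x, x \in L -> x *m x = 1%:M).

Lemma CI_cons x L : CI (x :: L) -> CI L.
Proof.
move=> [H1 H2]; split => [y z hy hz|y hy]; first by apply: H1; rewrite inE ?hy ?hz orbT.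
by apply: H2; rewrite inE hy orbT.
Qed.

Lemma comm_mp x L : (forall y, y \in L -> x *m y = y *m x) -> x *m mp L = mp L *m x.
Proof.
elim: L => [|y L IH] H /=; first by rewrite mulmx1 mul1mx.
rewrite mulmxA H ?mem_head // -!mulmxA IH // => z hz.
by apply: H; rewrite inE hz orbT.
Qed.

Lemma comm_mp_mask x L b : (forall y, y \in L -> x *m y = y *m x) ->
  x *m mp (mask b L) = mp (mask b L) *m x.
Proof. by move=> H; apply: comm_mp => y /mem_mask; apply: H. Qed.

Definition bxor (b b' : bitseq) : bitseq := [seq x.1 (+) x.2 | x <- zip b b'].

Lemma mp_mask_mul L b b' : CI L -> size b = size L -> size b' = size L ->
  mp (mask b L) *m mp (mask b' L) = mp (mask (bxor b b') L).
Proof.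
elim: L b b' => [|x L IH] [|u b] [|v b'] //=; first by rewrite mulmx1.
move=> hCI [] hb [] hb'.
have hC := CI_cons hCI.
have hx : forall y, y \in L -> x *m y = y *m x.
  by move=> y hy; apply: hCI.1; rewrite inE ?eqxx ?hy ?orbT.
have hxx : x *m x = 1%:M by apply: hCI.2; rewrite mem_head.
rewrite /bxor /= -/(bxor b b').
case: u; case: v => /=; rewrite -IH //.
- by rewrite -mulmxA (mulmxA (mp _)) -(comm_mp_mask b hx) !mulmxA hxx mul1mx.
- by rewrite !mulmxA.
- by rewrite !mulmxA (comm_mp_mask b hx).
Qed.

Lemma mp_mask_sq L b : CI L -> mp (mask b L) *m mp (mask b L) = 1%:M.
Proof.
elim: L b => [|x L IH] [|u b] //= hCI; rewrite ?mulmx1 //.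
have hC := CI_cons hCI.
have hx : forall y, y \in L -> x *m y = y *m x.
  by move=> y hy; apply: hCI.1; rewrite inE ?eqxx ?hy ?orbT.
have hxx : x *m x = 1%:M by apply: hCI.2; rewrite mem_head.
case: u => /=; last exact: IH.
by rewrite -mulmxA (mulmxA (mp _)) -comm_mp_mask // !mulmxA hxx mul1mx IH.
Qed.

Lemma invmx_invol (A : MX) : A *m A = 1%:M -> invmx A = A.
Proof.
move=> h; have [hu _] := mulmx1_unit h.
by rewrite -[invmx A]mulmx1 -h mulmxA mulVmx // mul1mx.
Qed.

Lemma in_gen_mask L g : CI L -> in_gen L g ->
  exists b, size b = size L /\ g = mp (mask b L).
Proof.
move=> hCI; elim => [|T hT|A B _ [b [hb ->]] _ [b' [hb' ->]]|A _ [b [hb ->]]].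
- by exists (nseq (size L) false); rewrite size_nseq mask_false.
- elim: L hCI hT => [|x L IH] // hCI.
  rewrite inE; case: eqP => [-> _|_ /= hT].
    by exists (true :: nseq (size L) false); rewrite /= size_nseq mask_false /= mulmx1.
  have [b [hb ->]] := IH (CI_cons hCI) hT.
  by exists (false :: b); rewrite /= hb.
- exists (bxor b b'); split; last by rewrite mp_mask_mul.
  by rewrite /bxor size_map size_zip hb hb' minnn.
- by exists b; split => //; rewrite invmx_invol // mp_mask_sq.
Qed.

Lemma mp_in_gen L b : in_gen L (mp (mask b L)).
Proof.
elim: L b => [|x L IH] [|u b] /=; try exact: gen_one.
have mono : forall g, in_gen L g -> in_gen (x :: L) g.
  move=> g; elim => [|T hT|A B _ hA _ hB|A _ hA].
  - exact: gen_one.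
  - by apply: gen_elt; rewrite inE hT orbT.
  - exact: gen_mul.
  - exact: gen_inv.
case: u; last exact: mono.
by apply: gen_mul; [apply: gen_elt; rewrite mem_head | apply: mono].
Qed.

Lemma pos2n : (0 < 2 ^ n)%N.
Proof. by rewrite expn_gt0. Qed.

Lemma scalar_inj (a b : C) : a%:M = b%:M :> MX -> a = b.
Proof.
move=> /matrixP /(_ (Ordinal pos2n) (Ordinal pos2n)).
by rewrite !mxE eqxx !mulr1n.
Qed.

Lemma notgen_nonscalar L (P : MX) : CI L -> P *m P = 1%:M ->
  ~ (in_gen L P \/ in_gen L (- P)) ->
  forall b (l : C), P *m mp (mask b L) != l%:M.
Proof.
move=> hCI hP hng b l; apply/eqP => E.
set A := mp (mask b L) in E.
have hA : A *m A = 1%:M by exact: mp_mask_sq.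
have EP : P = l *: A by rewrite -[P]mulmx1 -hA mulmxA E mul_scalar_mx.
have hl : l ^+ 2 = 1.
  apply: scalar_inj; rewrite -hP EP -scalemxAl -scalemxAr hA scalerA expr2.
  by rewrite scalemx1.
move: hl => /eqP; rewrite sqrf_eq1 => /orP [] /eqP hl; apply: hng.
- by left; rewrite EP hl scale1r; exact: mp_in_gen.
- by right; rewrite EP hl scaleN1r opprK; exact: mp_in_gen.
Qed.

End Lists.

Section Inv.
Variable C : numClosedFieldType.
Variable n m : nat.
Notation MX := 'M[C]_(2 ^ n).
Notation ent := (entry C n m).
Notation RV := 'rV['F_2]_m.

Definition sigo (o : RV) (K : {set 'I_m}) : 'F_2 := \sum_(k in K) o 0 k.
Definition G (o : RV) (e : ent) : MX := sgnF C (sigo o e.2) *: e.1.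
Definition Qe (o : RV) (e : ent) : MX := (2%:R)^-1 *: (1%:M + G o e).
Definition PiS (o : RV) (S : seq ent) : MX := foldr (fun e acc => Qe o e *m acc) 1%:M S.

Lemma sgnF_add (a b : 'F_2) : sgnF C (a + b) = sgnF C a * sgnF C b.
Proof.
case: (F2_cases a) => ->; case: (F2_cases b) => ->;
by rewrite /sgnF ?addr0 ?add0r ?F2_dbl /= ?mulr1 ?mul1r ?mulrNN ?mulr1.
Qed.

Lemma sgnF_sq (a : 'F_2) : sgnF C a * sgnF C a = 1.
Proof. by rewrite -sgnF_add F2_dbl /sgnF eqxx. Qed.

Lemma sgnF_pm (a : 'F_2) : sgnF C a = 1 \/ sgnF C a = -1.
Proof. by rewrite /sgnF; case: eqP; auto. Qed.

Lemma sig_symdiff o A B : sigo o (symdiff A B) = sigo o A + sigo o B.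
Proof.
rewrite /sigo !(big_mkcond (fun k => k \in _)) -big_split /=.
apply: eq_bigr => k _; rewrite /symdiff !inE.
by case: (k \in A); case: (k \in B); rewrite /= ?add0r ?addr0 ?F2_dbl.
Qed.

Lemma sig_singl o j : sigo o (singl m j) = ob o j.
Proof.
rewrite /sigo /ob; case: insubP => [k _ hk|hj].
  rewrite (big_pred1 k) // => i; by rewrite /singl inE -hk.
rewrite big_pred0 // => i; rewrite /singl inE; apply/negbTE; apply/eqP => hi.
by move: hj; rewrite -hi ltn_ord.
Qed.

Lemma sig_set0 o : sigo o set0 = 0.
Proof. by rewrite /sigo big_pred0 // => i; rewrite inE. Qed.

Lemma G_sq o e : e.1 *m e.1 = 1%:M -> G o e *m G o e = 1%:M.
Proof. by move=> h; rewrite /G -scalemxAl -scalemxAr h scalerA sgnF_sq scale1r. Qed.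

Lemma GQ o e : e.1 *m e.1 = 1%:M -> G o e *m Qe o e = Qe o e.
Proof.
move=> h; rewrite /Qe -scalemxAr mulmxDr mulmx1 G_sq //.
by rewrite addrC.
Qed.

Lemma comm_G o e f : e.1 *m f.1 = f.1 *m e.1 -> G o e *m G o f = G o f *m G o e.
Proof. by move=> h; rewrite /G -!scalemxAl -!scalemxAr h !scalerA mulrC. Qed.

Lemma comm_GX o e X : e.1 *m X = X *m e.1 -> G o e *m X = X *m G o e.
Proof. by move=> h; rewrite /G -scalemxAl -scalemxAr h. Qed.

Lemma comm_QX o e X : e.1 *m X = X *m e.1 -> Qe o e *m X = X *m Qe o e.
Proof.
move=> h; rewrite /Qe -scalemxAl -scalemxAr mulmxDl mulmxDr mul1mx mulmx1.
by rewrite comm_GX.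
Qed.

Lemma comm_PiX o S X : (forall e, e \in S -> e.1 *m X = X *m e.1) ->
  PiS o S *m X = X *m PiS o S.
Proof.
elim: S => [|e S IH] H /=; first by rewrite mulmx1 mul1mx.
rewrite -mulmxA IH; last by move=> f hf; apply: H; rewrite inE hf orbT.
by rewrite !mulmxA comm_QX // H // mem_head.
Qed.

Lemma Pi_rcons o S e : PiS o (rcons S e) = PiS o S *m Qe o e.
Proof.
elim: S => [|f S IH] /=; first by rewrite mulmx1 mul1mx.
by rewrite IH mulmxA.
Qed.

Definition SI (S : seq ent) := (forall e, e \in S -> isP e.1) /\ CI (map fst S).

Lemma SI_comm S e f : SI S -> e \in S -> f \in S -> e.1 *m f.1 = f.1 *m e.1.
Proof. by move=> [_ [H _]] he hf; apply: H; apply: map_f. Qed.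

Lemma SI_sq S e : SI S -> e \in S -> e.1 *m e.1 = 1%:M.
Proof. by move=> [_ [_ H]] he; apply: H; apply: map_f. Qed.

Lemma G_absorb o S e : SI S -> e \in S -> G o e *m PiS o S = PiS o S.
Proof.
move=> hS he.
have hc : forall f, f \in S -> e.1 *m f.1 = f.1 *m e.1 by move=> f hf; apply: (SI_comm hS he hf).
have he2 := SI_sq hS he.
elim: S he {hS} hc => [|f S IH] // he hc /=.
move: he; rewrite inE => /orP [/eqP <-|he].
  by rewrite mulmxA GQ.
have hf : e.1 *m f.1 = f.1 *m e.1 by apply: hc; rewrite mem_head.
have hQ : e.1 *m Qe o f = Qe o f *m e.1 by rewrite (comm_QX o (esym hf)).
rewrite (mulmxA (G o e)) (comm_GX o hQ) -mulmxA IH // => g hg.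
by apply: hc; rewrite inE hg orbT.

Qed.

Lemma Gprod o (s : seq ent) :
  foldr (fun e acc => G o e *m acc) 1%:M s = sgnF C (sigo o (ksum s)) *: mprod s.
Proof.
elim: s => [|e s IH] /=; first by rewrite sig_set0 /sgnF eqxx scale1r.
rewrite IH /G -scalemxAl -scalemxAr scalerA sig_symdiff sgnF_add.
by [].
Qed.

Lemma Gprod_absorb o (s : seq ent) (X : MX) :
  (forall e, e \in s -> G o e *m X = X) ->
  foldr (fun e acc => G o e *m acc) 1%:M s *m X = X.
Proof.
elim: s => [|e s IH] H /=; first by rewrite mul1mx.
rewrite -mulmxA IH ?H ?mem_head // => f hf.
by apply: H; rewrite inE hf orbT.
Qed.

Lemma char0_dbl (x : C) : x + x = 0 -> x = 0.
Proof.
move=> h; have: x *+ 2 = 0 by rewrite mulr2n.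
by rewrite -mulr_natr => /eqP; rewrite mulf_eq0 pnatr_eq0 orbF => /eqP.
Qed.

Lemma tr_anti (X Y Z : MX) : X *m Y = - (Y *m X) -> Y *m Z = Z *m Y ->
  Y *m Y = 1%:M -> \tr (X *m Z) = 0.
Proof.
move=> hXY hYZ hYY; apply: char0_dbl.
have e1 : \tr (Y *m X *m Y *m Z) = \tr (X *m Z).
  rewrite -!mulmxA mxtrace_mulC -!mulmxA -hYZ (mulmxA Y Y Z) hYY mul1mx //.
have hYX : Y *m X = - (X *m Y) by rewrite hXY opprK.
have e2 : \tr (Y *m X *m Y *m Z) = - \tr (X *m Z).
  by rewrite hYX !mulNmx raddfN -!mulmxA (mulmxA Y Y Z) hYY mul1mx.
by rewrite -{1}e1 e2 addNr.
Qed.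

Lemma tr_Pi0 o (S : seq ent) (X : MX) : (forall e, e \in S -> isP e.1) -> isP X ->
  (forall b (l : C), X *m mp (mask b (map fst S)) != l%:M) ->
  \tr (X *m PiS o S) = 0.
Proof.
elim: S X => [|e S IH] X hS hX H /=.
  rewrite mulmx1; apply: isP_tr => // l; move: (H [::] l) => /=; by rewrite mulmx1.
rewrite /Qe -scalemxAl -scalemxAr mxtraceZ mulmxDl mul1mx mulmxDr mxtraceD.
have hS' : forall f, f \in S -> isP f.1 by move=> f hf; apply: hS; rewrite inE hf orbT.
rewrite IH //; last by move=> b l; move: (H (false :: b) l).
rewrite mulmxA /G -scalemxAr -scalemxAl mxtraceZ IH ?mulr0 ?add0r ?mulr0 //.
- by apply: isP_mul => //; apply: hS; rewrite mem_head.
- by move=> b l; move: (H (true :: b) l); rewrite /= mulmxA.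
Qed.

End Inv.

Section Steps.
Variable C : numClosedFieldType.
Variable n m : nat.
Notation MX := 'M[C]_(2 ^ n).
Notation ent := (entry C n m).
Notation RV := 'rV['F_2]_m.

Definition Inv (S : seq ent) (R : seq (equation m)) (F : RV -> MX) : Prop :=
 [/\ SI S,
   forall o e, e \in S -> G o e *m F o = F o,
   forall o, F o != 0 -> satisfies R o,
   forall o, satisfies R o -> exists B : MX, F o *m B = PiS o S &
   forall o, \tr (PiS o S) * 2%:R ^+ size S = (2 ^ n)%:R].

Lemma mprod_mp (s : seq ent) : mprod s = mp (map fst s).
Proof. by elim: s => [|e s IH] //=; rewrite IH. Qed.

Lemma cliff_unit (U : MX) : clifford U -> U \in unitmx /\ invmx U = adjoint U.
Proof.
move=> [hU _]; have [hu _] := mulmx1_unit hU; split => //.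
by rewrite -[invmx U]mulmx1 -hU mulmxA mulVmx // mul1mx.
Qed.

Lemma conj_mul (U A B : MX) : U \in unitmx ->
  (U *m A *m invmx U) *m (U *m B *m invmx U) = U *m (A *m B) *m invmx U.
Proof.
move=> hu; by rewrite -!mulmxA (mulmxA (invmx U)) mulVmx // mul1mx.
Qed.

Lemma half_sg (x : 'F_2) : (2%:R)^-1 * (1 + sgnF C x) = if x == 0 then 1 else 0.
Proof.
rewrite /sgnF; case: eqP => _; last by rewrite subrr mulr0.
by rewrite mulVf // pnatr_eq0.
Qed.

Lemma proj_eig (c a : 'F_2) (P : pauli n) (X : MX) :
  pmx C P *m X = sgnF C a *: X ->
  proj C c P *m X = (if c + a == 0 then X else 0).
Proof.
move=> h; rewrite /proj -scalemxAl mulmxDl mul1mx -scalemxAl h scalerA -sgnF_add.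
rewrite -{1}[X]scale1r -scalerDl scalerA half_sg.
by case: eqP; rewrite ?scale1r ?scale0r.
Qed.

Lemma comm_proj (X : MX) c (P : pauli n) : X *m pmx C P = pmx C P *m X ->
  X *m proj C c P = proj C c P *m X.
Proof.
move=> h; rewrite /proj -scalemxAr -scalemxAl mulmxDr mulmxDl mulmx1 mul1mx.
by rewrite -scalemxAr -scalemxAl h.
Qed.

Lemma inv_gate (U : MX) S R F : clifford U -> Inv S R F ->
  Inv [seq (U *m e.1 *m invmx U, e.2) | e <- S] R (fun o => U *m F o).
Proof.
move=> hc [[hP [hC hQ]] h1 h2 h3 h4].
have [hu hinv] := cliff_unit hc.
have hVU : invmx U *m U = 1%:M by rewrite mulVmx.
have hG : forall (o : RV) (e : ent), G o (U *m e.1 *m invmx U, e.2) = U *m G o e *m invmx U.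
  by move=> o e; rewrite /G /= -scalemxAr -scalemxAl.
have hPi : forall (o : RV) (T : seq ent), PiS o [seq (U *m e.1 *m invmx U, e.2) | e <- T] =
    U *m PiS o T *m invmx U.
  move=> o; elim => [|e T IH] /=; first by rewrite mulmx1 mulmxV.
  have hQe : Qe o (U *m e.1 *m invmx U, e.2) = U *m Qe o e *m invmx U.
    by rewrite /Qe hG -[in RHS]scalemxAr -[in RHS]scalemxAl [in RHS]mulmxDr [in RHS]mulmxDl [in RHS]mulmx1 mulmxV.
  by rewrite IH hQe conj_mul.
split.
- split.
    move=> e /mapP [f hf ->] /=.
    have [l [p Ep]] := hP f hf.
    have [_ hcl] := hc; have [q Eq] := hcl p.
    by exists l, q; rewrite Ep -scalemxAr -scalemxAl hinv Eq.
  split.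
    move=> x y; rewrite -map_comp => /mapP [e he ->] /mapP [f hf ->] /=.
    by rewrite !conj_mul // (hC _ _ (map_f fst he) (map_f fst hf)).
  move=> x; rewrite -map_comp => /mapP [e he ->] /=.
  by rewrite conj_mul // (hQ _ (map_f fst he)) mulmx1 mulmxV.
- move=> o e /mapP [f hf ->].
  by rewrite hG -!mulmxA (mulmxA (invmx U)) hVU mul1mx h1.
- move=> o hF; apply: h2; apply: contra hF => /eqP ->; by rewrite mulmx0.
- move=> o hs; have [B hB] := h3 o hs.
  by exists (B *m invmx U); rewrite hPi mulmxA -(mulmxA U) hB.
- move=> o; rewrite hPi size_map mxtrace_mulC mulmxA hVU mul1mx; exact: h4.
Qed.

Lemma inv_dep (P : pauli n) S R F j b (eps : 'F_2) : Inv S R F -> size b = size S ->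
  (if eps == 1 then - pmx C P else pmx C P) = mprod (mask b S) ->
  Inv S (rcons R (j, ksum (mask b S), eps)) (fun o => proj C (ob o j) P *m F o).
Proof.
move=> [hS h1 h2 h3 h4] hb hE.
set A := mprod (mask b S).
have hA : A = sgnF C eps *: pmx C P.
  rewrite /A -hE /sgnF; case: (F2_cases eps) => ->; rewrite ?eqxx /= ?scale1r //.
  by rewrite scaleN1r.
have hPA : pmx C P = sgnF C eps *: A.
  by rewrite hA scalerA sgnF_sq scale1r.
have hcomm : forall e, e \in S -> e.1 *m pmx C P = pmx C P *m e.1.
  move=> e he; rewrite hPA -scalemxAr -scalemxAl; congr (_ *: _); rewrite /A mprod_mp map_mask.
  by apply: comm_mp_mask => y hy; exact: hS.2.1 _ _ (map_f fst he) hy.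
have hGp : forall o, foldr (fun e acc => G o e *m acc) 1%:M (mask b S) =
    (sgnF C (sigo o (ksum (mask b S))) * sgnF C eps) *: pmx C P.
  by move=> o; rewrite Gprod -/A hA scalerA.
have eigF : forall o, pmx C P *m F o =
    sgnF C (sigo o (ksum (mask b S)) + eps) *: F o.
  move=> o.
  have hF : foldr (fun e acc => G o e *m acc) 1%:M (mask b S) *m F o = F o.
    by apply: Gprod_absorb => e /mem_mask he; apply: h1.
  rewrite hGp -scalemxAl -sgnF_add in hF.
  by rewrite -{2}hF scalerA sgnF_sq scale1r.
have eigPi : forall o, pmx C P *m PiS o S =
    sgnF C (sigo o (ksum (mask b S)) + eps) *: PiS o S.
  move=> o.
  have hF : foldr (fun e acc => G o e *m acc) 1%:M (mask b S) *m PiS o S = PiS o S.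
    by apply: Gprod_absorb => e /mem_mask he; apply: G_absorb.
  rewrite hGp -scalemxAl -sgnF_add in hF.
  by rewrite -{2}hF scalerA sgnF_sq scale1r.
have hsat : forall o, satisfies (rcons R (j, ksum (mask b S), eps)) o <->
    satisfies R o /\ ob o j + sigo o (ksum (mask b S)) = eps.
  move=> o; split.
    move=> H; split; first by move=> e he; apply: H; rewrite mem_rcons inE he orbT.
    by apply: (H (j, ksum (mask b S), eps)); rewrite mem_rcons mem_head.
  move=> [H1 H2] e; rewrite mem_rcons inE => /orP [/eqP ->|he] //.
  exact: H1.
have key : forall o (c : 'F_2), c + (sigo o (ksum (mask b S)) + eps) == 0 =
   (c + sigo o (ksum (mask b S)) == eps).
  move=> o c; rewrite addrA; apply/eqP/eqP => h.
    by rewrite -[_ + _]addr0 -(F2_dbl eps) addrA h add0r.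
  by rewrite h F2_dbl.
split => //.
- move=> o e he /=.
  by rewrite mulmxA (comm_proj _ (comm_GX o (hcomm e he))) -mulmxA h1.
- move=> o /=; rewrite (proj_eig _ (eigF o)) key; case: ifP => [/eqP hq hF|_]; last by rewrite eqxx.
  by apply/hsat; split => //; exact: (h2 o hF).
- move=> o /hsat [hs hq]; have [B hB] := h3 o hs.
  by exists B; rewrite -mulmxA hB (proj_eig _ (eigPi o)) key hq eqxx.
Qed.

End Steps.

Lemma InP (T : eqType) (x : T) (s : seq T) : List.In x s <-> x \in s.
Proof.
elim: s => [|y s IH] //=; rewrite inE; split.
  by move=> [->|/IH ->]; rewrite ?eqxx ?orbT.
by move=> /orP [/eqP ->|/IH]; auto.
Qed.

Section Steps2.
Variable C : numClosedFieldType.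
Variable n m : nat.
Notation MX := 'M[C]_(2 ^ n).
Notation ent := (entry C n m).
Notation RV := 'rV['F_2]_m.

Lemma Qe_proj (o : RV) j (P : pauli n) : Qe o (pmx C P, singl m j) = proj C (ob o j) P.
Proof. by rewrite /Qe /G /= sig_singl. Qed.

Lemma G_proj (o : RV) j (P : pauli n) :
  G o (pmx C P, singl m j) *m proj C (ob o j) P = proj C (ob o j) P.
Proof. by rewrite -Qe_proj GQ //= pmx_sq. Qed.

Lemma half_idem (X : MX) : X *m X = 1%:M ->
  (2%:R^-1 *: (1%:M + X)) *m (2%:R^-1 *: (1%:M + X)) = 2%:R^-1 *: (1%:M + X) :> MX.
Proof.
move=> hX.
have e : (1%:M + X) *m (1%:M + X) = 2%:R *: (1%:M + X) :> MX.
  rewrite mulmxDl !mulmxDr !mul1mx mulmx1 hX scaler_nat mulr2n; congr (_ + _).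
  by rewrite addrC.
rewrite -scalemxAl -scalemxAr e !scalerA; congr (_ *: _).
by rewrite -mulrA mulVf ?mulr1 // pnatr_eq0.
Qed.

Lemma proj_idem c (P : pauli n) : proj C c P *m proj C c P = proj C c P.
Proof.
apply: half_idem; rewrite -scalemxAl -scalemxAr pmx_sq scalerA.
by rewrite sgnF_sq scale1r.
Qed.

Lemma sandwich (X Y : MX) : X *m Y = - (Y *m X) -> Y *m Y = 1%:M ->
  (1%:M + Y) *m X *m (1%:M + Y) = 0.
Proof.
move=> hXY hYY.
have e1 : Y *m X = - (X *m Y) by rewrite hXY opprK.
rewrite !mulmxDl !mulmxDr !mul1mx !mulmx1 e1 mulNmx -mulmxA hYY mulmx1.
by rewrite addrA addrK subrr.
Qed.

Lemma proj_sandwich c (P : pauli n) (X : MX) : X *m pmx C P = - (pmx C P *m X) ->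
  proj C c P *m X *m proj C c P = 0.
Proof.
move=> h; rewrite /proj -scalemxAl -scalemxAl -scalemxAr sandwich ?scaler0 //.
  by rewrite -scalemxAr -scalemxAl h scalerN.
by rewrite -scalemxAl -scalemxAr pmx_sq scalerA sgnF_sq scale1r.
Qed.



Lemma comm_or_anti (S : seq ent) (P : pauli n) e : SI S -> e \in S ->
  ~ anticomm e.1 (pmx C P) -> e.1 *m pmx C P = pmx C P *m e.1.
Proof.
move=> hS he hn; case: (isP_comm (hS.1 e he) (isP_pmx C P)) => // h.
Qed.


Lemma inv_free (P : pauli n) S R F j : Inv S R F ->
  ~ (in_gen (map fst S) (pmx C P) \/ in_gen (map fst S) (- pmx C P)) ->
  (forall e, List.In e S -> ~ anticomm e.1 (pmx C P)) ->
  Inv (rcons S (pmx C P, singl m j)) R (fun o => proj C (ob o j) P *m F o).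
Proof.
move=> [hS h1 h2 h3 h4] hng hna.
have hc : forall e, e \in S -> e.1 *m pmx C P = pmx C P *m e.1.
  by move=> e he; apply: (comm_or_anti hS he); apply: hna; apply/InP.
split.
- split.
    move=> e; rewrite mem_rcons inE => /orP [/eqP ->|he]; first exact: isP_pmx.
    exact: hS.1.
  split.
    move=> x y; rewrite map_rcons !mem_rcons !inE.
    move=> /orP [/eqP ->|hx] /orP [/eqP ->|hy] //.
    + by move: hy => /mapP [e he ->]; rewrite hc.
    + by move: hx => /mapP [e he ->]; rewrite hc.
    + exact: hS.2.1.
  move=> x; rewrite map_rcons mem_rcons inE => /orP [/eqP ->|hx]; first exact: pmx_sq.
  exact: hS.2.2.
- move=> o e; rewrite mem_rcons inE => /orP [/eqP ->|he] /=.
    by rewrite mulmxA G_proj.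
  by rewrite mulmxA (comm_proj _ (comm_GX o (hc e he))) -mulmxA h1.
- move=> o hF; apply: h2; apply: contra hF => /eqP ->; by rewrite mulmx0.
- move=> o hs; have [B hB] := h3 o hs.
  exists B; rewrite -mulmxA hB Pi_rcons Qe_proj.
  by rewrite -(comm_proj _ (comm_PiX o hc)).
- move=> o; rewrite Pi_rcons Qe_proj size_rcons exprS.
  have ht : \tr (pmx C P *m PiS o S) = 0.
    apply: tr_Pi0; [exact: hS.1 | exact: isP_pmx |].
    by apply: notgen_nonscalar => //; [exact: hS.2 | exact: pmx_sq].
  rewrite /proj -scalemxAr mxtraceZ mulmxDr mulmx1 mxtraceD -scalemxAr mxtraceZ.
  rewrite mxtrace_mulC ht mulr0 addr0 -(h4 o).
  by rewrite [_^-1 * _]mulrC -mulrA mulKf // pnatr_eq0.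
Qed.

End Steps2.

Section Anti.
Variable C : numClosedFieldType.
Variable n m : nat.
Notation MX := 'M[C]_(2 ^ n).
Notation ent := (entry C n m).
Notation RV := 'rV['F_2]_m.

Lemma comm_Tpow (T a b : MX) (k l : bool) :
  T *m a = a *m T -> T *m b = b *m T -> a *m b = b *m a ->
  (if k then T *m a else a) *m (if l then T *m b else b) =
  (if l then T *m b else b) *m (if k then T *m a else a).
Proof.
move=> ha hb hab; case: k; case: l => //.
- by rewrite -!mulmxA (mulmxA a T b) (mulmxA b T a) -ha -hb -!mulmxA hab.
- by rewrite -(mulmxA T a b) hab (mulmxA T b a) hb mulmxA.
- by rewrite (mulmxA a T b) -ha -(mulmxA T a b) hab mulmxA.
Qed.

Lemma sq_Tpow (T a : MX) (k : bool) :
  T *m a = a *m T -> T *m T = 1%:M -> a *m a = 1%:M ->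
  (if k then T *m a else a) *m (if k then T *m a else a) = 1%:M.
Proof.
move=> ha hT hA; case: k => //.
by rewrite -mulmxA (mulmxA a) -ha -mulmxA hA mulmx1 hT.
Qed.

Lemma Pi_extract o (xs ys : seq ent) e :
  (forall x, x \in xs -> e.1 *m x.1 = x.1 *m e.1) ->
  PiS o (xs ++ e :: ys) = Qe o e *m PiS o (xs ++ ys).
Proof.
elim: xs => [|x xs IH] H //=.
rewrite IH; last by move=> y hy; apply: H; rewrite inE hy orbT.
have hx : e.1 *m x.1 = x.1 *m e.1 by apply: H; rewrite mem_head.
have hQ : e.1 *m Qe o x = Qe o x *m e.1 by rewrite (comm_QX o (esym hx)).
by rewrite !mulmxA (comm_QX o hQ).
Qed.

Lemma QQ_mx (Y X : MX) : Y *m Y = 1%:M ->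
  (1%:M + Y) *m (1%:M + Y *m X) = (1%:M + Y) *m (1%:M + X).
Proof.
move=> hY; rewrite !mulmxDl !mulmxDr !mul1mx !mulmx1 mulmxA hY mul1mx.
by rewrite -!addrA [Y + X]addrC (addrCA (Y *m X) X Y) [Y *m X + Y]addrC.
Qed.

Lemma QQ o (e f : ent) (X : MX) : G o e *m G o e = 1%:M ->
  G o f = G o e *m X ->
  Qe o e *m Qe o f = Qe o e *m (2%:R^-1 *: (1%:M + X)).
Proof.
move=> hE hf; rewrite /Qe hf.
move: (G o e) hE => Y hY.
by rewrite -!scalemxAl -!scalemxAr QQ_mx.
Qed.

Definition gmod (eT : ent) (P : pauli n) (e : ent) : ent :=
  if e.1 *m pmx C P == - (pmx C P *m e.1) then (eT.1 *m e.1, symdiff eT.2 e.2) else e.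

Lemma inv_anti_gen (P : pauli n) xs eT ys R F j :
  Inv (xs ++ eT :: ys) R F -> anticomm eT.1 (pmx C P) ->
  Inv (rcons (map (gmod eT P) (xs ++ ys)) (pmx C P, singl m j)) R
      (fun o => proj C (ob o j) P *m F o).
Proof.
set S := xs ++ eT :: ys.
move=> [hS h1 h2 h3 h4] hTP.
have heT : eT \in S by rewrite mem_cat mem_head orbT.
have hrem : forall e, e \in xs ++ ys -> e \in S.
  by move=> e; rewrite !mem_cat inE => /orP [->|->]; rewrite ?orbT.
set T := eT.1.
have hTT : T *m T = 1%:M by apply: (SI_sq hS heT).
have hTe : forall e, e \in S -> T *m e.1 = e.1 *m T.
  by move=> e he; apply: (SI_comm hS heT he).
have hPP : pmx C P *m pmx C P = 1%:M by apply: pmx_sq.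
have hTP' : T *m pmx C P = - (pmx C P *m T) by exact: hTP.
have hPT : pmx C P *m T = - (T *m pmx C P) by rewrite hTP' opprK.
have hg : forall e, e \in S ->
   (gmod eT P e = (T *m e.1, symdiff eT.2 e.2) /\ anticomm e.1 (pmx C P)) \/
   (gmod eT P e = e /\ e.1 *m pmx C P = pmx C P *m e.1).
  move=> e he; rewrite /gmod; case: eqP => h; [left | right]; split => //.
  exact: (comm_or_anti hS he h).
have k1 : forall e, e \in S -> (gmod eT P e).1 *m pmx C P = pmx C P *m (gmod eT P e).1.
  move=> e he; case: (hg e he) => [[-> ha]|[-> hc]] //=.
  by rewrite -mulmxA ha mulmxN (mulmxA T) hTP' mulNmx opprK -mulmxA.
have k6 : forall e, e \in S -> exists k : bool, (gmod eT P e).1 = if k then T *m e.1 else e.1.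
  move=> e he; case: (hg e he) => [[-> _]|[-> _]]; [by exists true | by exists false].
have k3 : forall o e, e \in S -> anticomm e.1 (pmx C P) ->
    G o (T *m e.1, symdiff eT.2 e.2) = G o eT *m G o e.
  move=> o e he _; rewrite /G /= sig_symdiff sgnF_add -scalemxAl -scalemxAr scalerA.
  by [].
have kT : forall e, e \in S -> (gmod eT P e).1 *m T = T *m (gmod eT P e).1.
  move=> e he; have [k ->] := k6 e he; case: k.
    by rewrite -mulmxA -hTe // mulmxA.
  by rewrite hTe.
have kF : forall o e, e \in S -> G o (gmod eT P e) *m F o = F o.
  move=> o e he; case: (hg e he) => [[-> ha]|[-> _]]; last exact: h1.
  by rewrite k3 // -mulmxA h1 // h1.
have hPi : forall o, PiS o S = Qe o eT *m PiS o (xs ++ ys).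
  by move=> o; rewrite /S Pi_extract // => x hx; apply: hTe; rewrite mem_cat hx.
have hPiR : forall o l, (forall e, e \in l -> e \in S) ->
    Qe o eT *m PiS o l = Qe o eT *m PiS o (map (gmod eT P) l).
  move=> o; elim => [|e l IH] hl //=.
  have he : e \in S by apply: hl; rewrite mem_head.
  have hl' : forall f, f \in l -> f \in S by move=> f hf; apply: hl; rewrite inE hf orbT.
  have cTe : Qe o eT *m Qe o e = Qe o e *m Qe o eT.
    by apply: comm_QX; exact: esym (comm_QX o (esym (hTe e he))).
  have QQe : Qe o eT *m Qe o (gmod eT P e) = Qe o eT *m Qe o e.
    case: (hg e he) => [[-> ha]|[-> _]] //.
    by rewrite (QQ (X := G o e)) ?k3 //; apply: G_sq.
  rewrite mulmxA cTe -mulmxA (IH hl') mulmxA -cTe -QQe -mulmxA //.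
have hmap : forall e, e \in map (gmod eT P) (xs ++ ys) ->
    exists2 f, f \in S & e = gmod eT P f.
  by move=> e /mapP [f hf ->]; exists f => //; apply: hrem.
have hPR : forall o, pmx C P *m PiS o (map (gmod eT P) (xs ++ ys)) =
    PiS o (map (gmod eT P) (xs ++ ys)) *m pmx C P.
  move=> o; apply: esym; apply: comm_PiX => e /hmap [f hf ->]; exact: k1.
have hGT : forall o, G o eT *m PiS o (map (gmod eT P) (xs ++ ys)) =
    PiS o (map (gmod eT P) (xs ++ ys)) *m G o eT.
  move=> o; apply: esym; apply: comm_PiX => e /hmap [f hf ->].
  by rewrite /G -scalemxAr -scalemxAl kT.
have hGP : forall o, G o eT *m pmx C P = - (pmx C P *m G o eT).
  by move=> o; rewrite /G -scalemxAr -scalemxAl hTP' scalerN.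
have hGG : forall o, G o eT *m G o eT = 1%:M by move=> o; apply: G_sq.
split.
- split.
    move=> e; rewrite mem_rcons inE => /orP [/eqP ->|/hmap [f hf ->]]; first exact: isP_pmx.
    have [k ->] := k6 f hf; case: k; last exact: hS.1.
    by apply: isP_mul; apply: hS.1.
  split.
    move=> x y; rewrite map_rcons !mem_rcons !inE.
    have hx1 : forall x, x \in map fst (map (gmod eT P) (xs ++ ys)) ->
        exists2 f, f \in S & x = (gmod eT P f).1.
      by move=> z /mapP [e /hmap [f hf ->] ->]; exists f.
    move=> /orP [/eqP ->|/hx1 [f hf ->]] /orP [/eqP ->|/hx1 [f' hf' ->]] //.
    + by rewrite k1.
    + by rewrite k1.
    + have [k ->] := k6 f hf; have [l ->] := k6 f' hf'.
      by apply: comm_Tpow; [exact: hTe | exact: hTe | exact: (SI_comm hS hf hf')].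
  move=> x; rewrite map_rcons mem_rcons inE => /orP [/eqP ->|]; first exact: pmx_sq.
  move=> /mapP [e /hmap [f hf ->] ->].
  have [k ->] := k6 f hf; apply: sq_Tpow => //; [exact: hTe | exact: (SI_sq hS hf)].
- move=> o e; rewrite mem_rcons inE => /orP [/eqP ->|/hmap [f hf ->]] /=.
    by rewrite mulmxA G_proj.
  by rewrite mulmxA (comm_proj _ (comm_GX o (k1 f hf))) -mulmxA kF.
- move=> o hF; apply: h2; apply: contra hF => /eqP ->; by rewrite mulmx0.
- move=> o hs; have [B hB] := h3 o hs.
  exists (B *m (2%:R *: proj C (ob o j) P)).
  rewrite Pi_rcons Qe_proj mulmxA -(mulmxA _ (F o)) hB hPi hPiR //.
  have hQTQ : proj C (ob o j) P *m Qe o eT *m proj C (ob o j) P =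
      2%:R^-1 *: proj C (ob o j) P.
    rewrite /Qe; move: (proj_idem C (ob o j) P) (proj_sandwich (ob o j) (hGP o)).
    move: (proj C (ob o j) P) (G o eT) => Q Y hQQ hQYQ.
    by rewrite -scalemxAr -scalemxAl mulmxDr mulmx1 mulmxDl hQQ hQYQ addr0.
  have hQR := comm_proj (ob o j) (esym (hPR o)).
  move: hQTQ hQR.
  set Q := proj C (ob o j) P; set PR := PiS o _; set QT := Qe o eT => hQTQ hQR.
  rewrite -scalemxAr mulmxA -(mulmxA (Q *m QT) PR Q) hQR mulmxA hQTQ.
  by rewrite -scalemxAl scalerA mulfV ?pnatr_eq0 // scale1r -hQR.
- move=> o; rewrite Pi_rcons Qe_proj size_rcons size_map.
  have -> : (size (xs ++ ys)).+1 = size S by rewrite /S !size_cat /= addnS.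
  rewrite -(h4 o) hPi hPiR //; congr (_ * _).
  set PR := PiS o _.
  have t1 : \tr (pmx C P *m PR) = 0.
    apply: (@tr_anti _ _ _ (G o eT)); [by rewrite hGP opprK | exact: hGT | exact: hGG].
  have t2 : \tr (G o eT *m PR) = 0.
    by apply: (@tr_anti _ _ _ (pmx C P)); [exact: hGP | exact: hPR | exact: hPP].
  rewrite mxtrace_mulC /proj /Qe -!scalemxAl !mxtraceZ !mulmxDl !mul1mx !mxtraceD.
  by rewrite -scalemxAl mxtraceZ t1 t2 mulr0.
Qed.

End Anti.

Section Run.
Variable C : numClosedFieldType.
Variable n m : nat.
Notation MX := 'M[C]_(2 ^ n).
Notation ent := (entry C n m).
Notation RV := 'rV['F_2]_m.

Definition opm (o : RV) (j : nat) (x : op C n) : MX :=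
  match x with Gate U => U | Meas P => proj C (ob o j) P end.

Fixpoint fwd (o : RV) (j : nat) (c : circuit C n) (M : MX) : MX :=
  match c with
  | [::] => M
  | Gate U :: c' => fwd o j c' (U *m M)
  | Meas P :: c' => fwd o j.+1 c' (proj C (ob o j) P *m M)
  end.

Lemma run_aux_fwd (o : RV) j c (M : MX) (psi : 'cV[C]_(2 ^ n)) :
  run_aux o j c (M *m psi) = fwd o j c M *m psi.
Proof.
elim: c j M => [|x c IH] j M //=.
by case: x => [U|P]; rewrite mulmxA IH.
Qed.

Lemma step_inv x (S : seq ent) R j S' R' j' F :
  step x (S, R, j) (S', R', j') ->
  (forall U, x = Gate U -> clifford U) ->
  Inv S R F ->
  j' = (j + is_meas x)%N /\ Inv S' R' (fun o => opm o j x *m F o).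
Proof.
move=> hst hcl hI; inversion hst; subst => /=.
- rewrite addn0; split => //.
  by apply: inv_gate => //; apply: hcl.
- rewrite addn1; split => //.
  exact: inv_dep.
- rewrite addn1; split => //.
  set d := (1%:M, set0) : ent.
  have hS : S = take i S ++ nth d S i :: drop i.+1 S by rewrite -drop_nth // cat_take_drop.
  have hI' : Inv (take i S ++ nth d S i :: drop i.+1 S) R' F by rewrite -hS.
  match goal with h : anticomm _ _ |- _ => exact: (inv_anti_gen j hI' h) end.
- rewrite addn1; split => //.
  exact: inv_free.
Qed.

Lemma valid_cons (x : op C n) c : valid_circuit (x :: c) ->
  (forall U, x = Gate U -> clifford U) /\ valid_circuit c.
Proof.
move=> hv; split; first by move=> U hx; apply: hv; left.
by move=> U hU; apply: hv; right.
Qed.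

Lemma run_inv c (s1 s3 : state C n m) : run_alg c s1 s3 -> valid_circuit c ->
  forall F, Inv s1.1.1 s1.1.2 F -> Inv s3.1.1 s3.1.2 (fun o => fwd o s1.2 c (F o)).
Proof.
elim => [s|x c' [[S1 R1] j1] [[S2 R2] j2] s4 hst _ IH] hv F hI //=.
have [hcl hv'] := valid_cons hv.
have [hj hI2] := step_inv hst hcl hI.
have := IH hv' _ hI2; rewrite /= hj.
by case: x {hst hcl hv hj hI2 IH} => [U|P] /=; rewrite ?addn0 ?addn1.
Qed.

Lemma step_exists x (S : seq ent) R j F : (forall U, x = Gate U -> clifford U) ->
  Inv S R F -> exists s2, step x (S, R, j) s2.
Proof.
move=> hcl hI; case: x hcl => [U|P] hcl.
  by eexists; apply: step_gate.
have hCI : CI (map fst S) by case: hI => [[_ h]].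
case: (classic (in_gen (map fst S) (pmx C P) \/ in_gen (map fst S) (- pmx C P))) => hg.
  have hg' := hg.
  case: hg => hg.
    have [b [hb E]] := in_gen_mask hCI hg.
    exists (S, rcons R (j, ksum (mask b S), 0), j.+1); apply: step_dep => //.
      by rewrite hb size_map.
    by rewrite mprod_mp map_mask -E.
  have [b [hb E]] := in_gen_mask hCI hg.
  exists (S, rcons R (j, ksum (mask b S), 1), j.+1); apply: step_dep => //.
    by rewrite hb size_map.
  by rewrite mprod_mp map_mask -E.
case: (boolP (has (fun e : ent => e.1 *m pmx C P == - (pmx C P *m e.1)) S)) => hh.
  eexists; apply: (@step_anti _ _ _ P S R j (find (fun e : ent => e.1 *m pmx C P == - (pmx C P *m e.1)) S)) => //.
    by rewrite -has_find.
  by apply/eqP; apply: (nth_find _ hh).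
eexists; apply: step_free => // e /InP he.
by move: hh => /hasPn /(_ e he) /eqP.
Qed.

Lemma run_exists c : valid_circuit c -> forall (S : seq ent) R j F, Inv S R F ->
  exists S' R' j', run_alg c (S, R, j) (S', R', j').
Proof.
elim: c => [|x c IH] hv S R j F hI.
  by exists S, R, j; apply: run_nil.
have [hcl hv'] := valid_cons hv.
have [[[S2 R2] j2] hst] := step_exists j hcl hI.
have [_ hI2] := step_inv hst hcl hI.
have [S' [R' [j' hr]]] := IH hv' _ _ j2 _ hI2.
by exists S', R', j'; apply: run_cons hr.
Qed.

End Run.

Section Final.
Variable C : numClosedFieldType.
Variable n m : nat.
Notation MX := 'M[C]_(2 ^ n).
Notation ent := (entry C n m).
Notation RV := 'rV['F_2]_m.

Definition set_bit (o : RV) (j : nat) (b : 'F_2) : RV :=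
  \row_k (if val k == j then b else o 0 k).

Lemma ob_set o j b : (j < m)%N -> ob (set_bit o j b) j = b.
Proof.
move=> hj; rewrite /ob; case: insubP => [k _ hk|]; last by rewrite hj.
by rewrite mxE hk eqxx.
Qed.

Lemma ob_set_ne o j b k : k != j -> ob (set_bit o j b) k = ob o k.
Proof.
move=> hk; rewrite /ob; case: insubP => [k' _ hk'|] //.
by rewrite mxE hk' (negbTE hk).
Qed.

Lemma proj_sum (P : pauli n) (X : MX) : proj C 0 P *m X + proj C 1 P *m X = X.
Proof.
rewrite -mulmxDl /proj /sgnF eqxx /= -scalerDr scale1r.
rewrite scaleN1r addrACA subrr addr0 -mulr2n -scaler_nat scalerA.
by rewrite mulVf ?pnatr_eq0 // scale1r mul1mx.
Qed.

Lemma fwd_nonzero c : valid_circuit c -> forall j (Fn : RV -> MX),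
  (j + nmeas c <= m)%N -> (exists o, Fn o != 0) ->
  (forall o o', (forall k, (k < j)%N -> ob o k = ob o' k) -> Fn o = Fn o') ->
  exists o, fwd o j c (Fn o) != 0.
Proof.
elim: c => [|x c IH] hv j Fn hjm [o ho] hdep /=; first by exists o.
have [hcl hv'] := valid_cons hv.
case: x hcl hjm hv => [U|P] hcl hjm hv.
  have [hu _] := cliff_unit (hcl U erefl).
  apply: (IH hv' j (fun o => U *m Fn o)) => //.
  - exists o; apply: contra ho => /eqP h.
    by rewrite -[Fn o]mul1mx -(mulVmx hu) -mulmxA h mulmx0.
  - by move=> o1 o2 h; rewrite (hdep o1 o2 h).
rewrite /nmeas /= add1n addnS in hjm.
have hj : (j < m)%N by apply: leq_ltn_trans hjm; rewrite leq_addr.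
apply: (IH hv' j.+1 (fun o => proj C (ob o j) P *m Fn o)).
- by rewrite addSn.
- have hs := proj_sum P (Fn o).
  pose b : 'F_2 := if proj C 0 P *m Fn o != 0 then 0 else 1.
  exists (set_bit o j b).
  rewrite ob_set // (hdep _ o); last first.
    by move=> k hk; rewrite ob_set_ne // neq_ltn hk.
  rewrite /b; case: ifP => // h0; move: h0 => /negbT; rewrite negbK => /eqP h0.
  by apply: contra ho => /eqP h1; rewrite -hs h0 h1 addr0.
- move=> o1 o2 h; rewrite (h j (ltnSn j)) (hdep o1 o2) // => k hk.
  by apply: h; apply: ltnW.
Qed.

Lemma sqnorm_eq0 (v : 'cV[C]_(2 ^ n)) : sqnorm v = 0 -> v = 0.
Proof.
move=> h; apply/matrixP => i k; rewrite (ord1 k) mxE.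
have := @psumr_eq0P _ _ xpredT (fun l => `|v l 0| ^+ 2) (fun l _ => exprn_ge0 2 (normr_ge0 (v l 0))) h i isT.
by move/eqP; rewrite expf_eq0 /= normr_eq0 => /eqP.
Qed.

Lemma sqnorm_delta (k : 'I_(2 ^ n)) : sqnorm (delta_mx k 0 : 'cV[C]_(2 ^ n)) = 1.
Proof.
rewrite /sqnorm (bigD1 k) //= big1 => [|i hi]; rewrite mxE.
  by rewrite !eqxx /= normr1 expr1n addr0.
by rewrite (negbTE hi) /= normr0 expr0n.
Qed.

Lemma inv_iff (S : seq ent) R (Fc : RV -> MX) : Inv S R Fc ->
  forall o, Fc o != 0 <-> satisfies R o.
Proof.
move=> [hS h1 h2 h3 h4] o; split; first exact: h2.
move=> hs; have [B hB] := h3 o hs.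
apply/negP => /eqP h0; move: (h4 o); rewrite -hB h0 mul0mx mxtrace0 mul0r.
by move/eqP; rewrite eq_sym pnatr_eq0 expn_eq0.
Qed.

End Final.

Section Lin.
Variable m : nat.
Notation RV := 'rV['F_2]_m.

Definition Lf (e : equation m) (v : RV) : 'F_2 := ob v e.1.1 + \sum_(k in e.1.2) v 0 k.
Definition homb (R : seq (equation m)) (v : RV) : bool := all (fun e => Lf e v == 0) R.

Lemma ob_lin (a : 'F_2) (u v : RV) j : ob (a *: u + v) j = a * ob u j + ob v j.
Proof. by rewrite /ob; case: insubP => [k _ _|_]; rewrite ?mxE ?mulr0 ?addr0. Qed.

Lemma Lf_lin e (a : 'F_2) (u v : RV) : Lf e (a *: u + v) = a * Lf e u + Lf e v.
Proof.
rewrite /Lf ob_lin mulrDr -addrA -addrA; congr (_ + _).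
rewrite addrCA; congr (_ + _).
rewrite mulr_sumr -big_split /=; apply: eq_bigr => k _; by rewrite !mxE.
Qed.

Lemma Lf0 e : Lf e 0 = 0.
Proof.
rewrite /Lf big1 => [|k _]; last by rewrite mxE.
by rewrite /ob; case: insubP => [k _ _|_]; rewrite ?mxE addr0.
Qed.

Lemma Lf_opp e (v : RV) : Lf e (- v) = - Lf e v.
Proof. by have := Lf_lin e (-1) v 0; rewrite addr0 scaleN1r Lf0 addr0 mulN1r. Qed.

Lemma Lf_sub e (u v : RV) : Lf e (u - v) = Lf e u - Lf e v.
Proof. by rewrite -{1}[u]scale1r Lf_lin Lf_opp mul1r. Qed.

Lemma sat_hom (R : seq (equation m)) (a o : RV) : satisfies R a ->
  (satisfies R o <-> homb R (o - a)).
Proof.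
move=> ha; split.
  move=> ho; apply/allP => e he; rewrite Lf_sub /Lf.
  by rewrite (ho e he) (ha e he) subrr.
move=> /allP h e he; have := h e he; rewrite Lf_sub /Lf (ha e he) subr_eq0.
by move/eqP.
Qed.

Definition Wsp (R : seq (equation m)) : {vspace RV} :=
  <<[seq v <- enum [set: RV] | homb R v]>>%VS.

Lemma mem_Wsp R (v : RV) : (v \in Wsp R) = homb R v.
Proof.
apply/idP/idP => [hv|hv]; last first.
  by apply: memv_span; rewrite mem_filter hv mem_enum in_setT.
set X := [seq v <- enum [set: RV] | homb R v] in hv.
have := coord_span (X := in_tuple X) hv => ->.
apply: (big_ind (homb R)).
- by apply/allP => e _; rewrite Lf0.
- move=> x y /allP hx /allP hy; apply/allP => e he.
  by rewrite -[x]scale1r Lf_lin (eqP (hx e he)) (eqP (hy e he)) mulr0 addr0.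
- move=> i _; apply/allP => e he.
  have hXi : homb R X`_i.
    have : X`_i \in X by apply: mem_nth.
    by rewrite mem_filter => /andP [].
  rewrite -[_ *: _]addr0 Lf_lin Lf0 addr0.
  by move: hXi => /allP /(_ e he) /eqP ->; rewrite mulr0.
Qed.

End Lin.

Lemma poss_fwd (C : numClosedFieldType) (n : nat) (c : circuit C n)
  (o : 'rV['F_2]_(nmeas c)) : possible o <-> fwd o 0 c 1%:M != 0.
Proof.
have hp : forall psi, prob o psi = sqnorm (fwd o 0 c 1%:M *m psi).
  by move=> psi; rewrite /prob -run_aux_fwd mul1mx.
split.
  move=> [psi [_ hpr]]; apply: contra hpr => /eqP h0.
  by rewrite hp h0 mul0mx /sqnorm big1 // => i _; rewrite mxE normr0 expr0n.
move=> h; have : exists i k, fwd o 0 c 1%:M i k != 0.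
  case: (boolP [exists i, exists k, fwd o 0 c 1%:M i k != 0]) => [/existsP [i /existsP [k hk]]|hn].
    by exists i, k.
  exfalso; apply: (negP h); apply/eqP/matrixP => i k; rewrite mxE.
  move: hn; rewrite negb_exists => /forallP /(_ i); rewrite negb_exists => /forallP /(_ k).
  by rewrite negbK => /eqP.
move=> [i [k hik]]; exists (delta_mx k 0); split; first exact: sqnorm_delta.
rewrite hp; apply/eqP => /sqnorm_eq0 /matrixP /(_ i 0).
rewrite !mxE => hs; move: hik; apply/negP; rewrite negbK; apply/eqP.
rewrite -hs (bigD1 k) //= big1 => [|l hl]; rewrite mxE.
  by rewrite !eqxx mulr1 addr0.
by rewrite (negbTE hl) mulr0.
Qed.

Lemma Inv0 (C : numClosedFieldType) (n m : nat) :
  Inv (m := m) (n := n) (C := C) [::] [::] (fun _ => 1%:M).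
Proof.
rewrite /Inv /SI /CI; split => //.
- by move=> o _; exists 1%:M; rewrite mulmx1.
- by move=> o; rewrite /= mxtrace1 expr0 mulr1.
Qed.

Unset Implicit Arguments.

Theorem mainTheorem1 (C : numClosedFieldType) (n : nat) (c : circuit C n)
    (hc : valid_circuit c) :
  (exists (a : 'rV['F_2]_(nmeas c)) (W : {vspace 'rV['F_2]_(nmeas c)}),
      forall o : 'rV['F_2]_(nmeas c), possible o <-> o - a \in W) /\
  (exists R, OCA (m := nmeas c) c R) /\
  (forall R, OCA (m := nmeas c) c R ->
     forall o : 'rV['F_2]_(nmeas c), possible o <-> satisfies R o).
Proof.
have hex : exists R, OCA (m := nmeas c) c R.
  have [S' [R' [j' hr]]] := run_exists hc 0 (Inv0 C n (nmeas c)).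
  by exists R', S', j'.
have hiff : forall R, OCA (m := nmeas c) c R ->
     forall o : 'rV['F_2]_(nmeas c), possible o <-> satisfies R o.
  move=> R [S [j hr]] o.
  have hI := run_inv hr hc (Inv0 C n (nmeas c)).
  rewrite poss_fwd; exact: (inv_iff hI).
split; last split; [|exact: hex|exact: hiff].
have [R0 hR0] := hex.
have [a ha] : exists a : 'rV['F_2]_(nmeas c), fwd a 0 c 1%:M != 0.
  apply: (fwd_nonzero hc) => //.
  exists 0; apply/eqP => /matrixP /(_ (Ordinal (pos2n n)) (Ordinal (pos2n n))).
  by rewrite !mxE eqxx /= => /eqP; rewrite oner_eq0.
have hsa : satisfies R0 a by apply/(hiff R0 hR0 a); apply/poss_fwd.
exists a, (Wsp R0) => o.
by rewrite mem_Wsp -(sat_hom o hsa); exact: hiff.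
Qed.
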